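(* Let $a\neq 0$ be real and consider the characteristic equation $$\lambda^{2}-\varepsilon\lambda-\varepsilon a e^{-\lambda\tau}+1=0.$$ For $\varepsilon>0$ satisfying $$0<\varepsilon<\sqrt{2},\qquad \varepsilon|a|<1,\qquad \varepsilon^{2}+4a^{2}>4,\tag{H0}$$ define $$\omega_{1,2}=\omega_{1,2}(\varepsilon)=\frac{1}{\sqrt{2}}\Big(2-\varepsilon^{2}\pm\varepsilon\sqrt{\varepsilon^{2}-4+4a^{2}}\Big)^{1/2}\quad(\omega_1>\omega_2>0),$$ and, for $j=0,1,2,\dots$, $$\tau_{1,2}^{j}=\begin{cases}\dfrac{1}{\omega_{1,2}}\Big(\arccos\big(\tfrac{1-\omega_{1,2}^{2}}{\varepsilon a}\big)+2j\pi\Big), & a>0,\\[2mm] \dfrac{1}{\omega_{1,2}}\Big(2\pi-\arccos\big(\tfrac{1-\omega_{1,2}^{2}}{\varepsilon a}\big)+2j\pi\Big), & a<0.\end{cases}$$ Suppose there is $\varepsilon_0$ satisfying (H0) such that, with these quantities computed at $\varepsilon=\varepsilon_0$, $\tau_{1}^{m}=\tau_{2}^{n}=:\tau_0$ for some $m,n\in\mathbb{N}$. Then at $(\varepsilon,\tau)=(\varepsilon_0,\tau_0)$ the characteristic equation has two pairs of simple purely imaginary roots $\pm i\omega_1$ and $\pm i\omega_2$.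
   Context: This is the characteristic equation at the equilibrium $x=0$ of the delayed van der Pol oscillator $\ddot{x}(t)+\varepsilon(x^{2}(t)-1)\dot{x}(t)+x(t)=\varepsilon f(x(t-\tau))$, where $\varepsilon>0$, $\tau>0$, and $f$ is smooth near $0$ with $f(0)=f''(0)=0$, $f'(0)=a\neq0$. *)

(* Defs.v *)
From Stdlib Require Import Reals.
From Coquelicot Require Import Coquelicot.
Open Scope R_scope.

Definition Cexp (z : C) : C :=
  (exp (Re z) * cos (Im z), exp (Re z) * sin (Im z)).

Definition charP (eps a tau : R) (lam : C) : C :=
  (lam * lam - RtoC eps * lam
   - RtoC (eps * a) * Cexp (- (lam * RtoC tau)) + 1)%C.

Definition simple_root (f : C -> C) (z : C) : Prop :=
  f z = 0%C /\ exists l : C, @is_derive C_AbsRing C_NormedModule f z l /\ l <> 0%C.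

Definition omega1 (eps a : R) : R :=
  / sqrt 2 * sqrt (2 - eps ^ 2 + eps * sqrt (eps ^ 2 - 4 + 4 * a ^ 2)).
Definition omega2 (eps a : R) : R :=
  / sqrt 2 * sqrt (2 - eps ^ 2 - eps * sqrt (eps ^ 2 - 4 + 4 * a ^ 2)).

Definition tau_of (eps a w : R) (j : nat) : R :=
  if Rlt_dec 0 a then
    / w * (acos ((1 - w ^ 2) / (eps * a)) + 2 * INR j * PI)
  else
    / w * (2 * PI - acos ((1 - w ^ 2) / (eps * a)) + 2 * INR j * PI).

Definition tau1 (eps a : R) (j : nat) : R := tau_of eps a (omega1 eps a) j.
Definition tau2 (eps a : R) (j : nat) : R := tau_of eps a (omega2 eps a) j.

(* Main.v *)
From Stdlib Require Import Reals Lra Psatz.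
From Coquelicot Require Import Coquelicot.
Require Import Defs.
Open Scope R_scope.

Lemma exp_bnd x : Rabs x <= /2 -> 0 <= exp x - 1 - x <= 2 * x ^ 2.
Proof.
  intros Hx. apply Rabs_le_between in Hx.
  pose proof (exp_ineq1_le x). pose proof (exp_ineq1_le (-x)).
  assert (HEF : exp x * exp (-x) = 1) by (rewrite <- exp_plus; replace (x + - x) with 0 by ring; apply exp_0).
  split; [lra|].
  assert (exp x * (1 - x) <= 1) by nra.
  assert (exp x <= 2) by nra.
  destruct (Rle_dec 0 x); nra.
Qed.

Lemma cos_bnd y : Rabs y <= 1 -> 0 <= 1 - cos y <= y ^ 2 / 2.
Proof.
  intros Hy. apply Rabs_le_between in Hy.
  pose proof (COS_bound y).
  destruct (pre_cos_bound y 0) as [H1 _]; try lra.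
  unfold cos_approx in H1. simpl in H1. unfold cos_term in H1. simpl in H1.
  lra.
Qed.

Lemma sin_bnd_pos y : 0 <= y <= 1 -> Rabs (sin y - y) <= y ^ 2.
Proof.
  intros Hy.
  destruct (pre_sin_bound y 0) as [H1 _]; try lra.
  unfold sin_approx in H1. simpl in H1. unfold sin_term in H1. simpl in H1.
  destruct (Req_dec y 0) as [->|Hn].
  - rewrite sin_0. rewrite Rminus_0_r, Rabs_R0. lra.
  - pose proof (sin_lt_x y ltac:(lra)).
    apply Rabs_le. split; nra.
Qed.

Lemma sin_bnd y : Rabs y <= 1 -> Rabs (sin y - y) <= y ^ 2.
Proof.
  intros Hy. destruct (Rle_dec 0 y).
  - apply sin_bnd_pos. apply Rabs_le_between in Hy. lra.
  - replace (sin y - y) with (- (sin (-y) - (-y))) by (rewrite sin_neg; ring).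
    rewrite Rabs_Ropp. replace (y^2) with ((-y)^2) by ring.
    apply sin_bnd_pos. apply Rabs_le_between in Hy. lra.
Qed.
Lemma Cexp_add a b : Cexp (a + b)%C = (Cexp a * Cexp b)%C.
Proof.
  destruct a as [a1 a2], b as [b1 b2]. unfold Cexp, Cmult, Cplus; simpl.
  rewrite exp_plus, cos_plus, sin_plus. f_equal; ring.
Qed.

Lemma Cmod_le p q A B : Rabs p <= A -> Rabs q <= B -> Cmod (p, q) <= A + B.
Proof.
  intros H1 H2. unfold Cmod; simpl.
  assert (0 <= A) by (pose proof (Rabs_pos p); lra).
  assert (0 <= B) by (pose proof (Rabs_pos q); lra).
  rewrite <- (sqrt_pow2 (A + B)) by lra.
  apply sqrt_le_1_alt.
  apply Rabs_le_between in H1. apply Rabs_le_between in H2. nra.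
Qed.

Lemma Cexp_rem h : Cmod h <= /2 -> Cmod (Cexp h - 1 - h)%C <= 7 * Cmod h ^ 2.
Proof.
  intros Hh.
  pose proof (re_le_Cmod h) as Hr.
  assert (Hi : Rabs (Im h) <= Cmod h).
  { pose proof (Rmax_Cmod h). pose proof (Rmax_r (Rabs (fst h)) (Rabs (snd h))). unfold Im. lra. }
  destruct h as [h1 h2]. unfold Re, Im in *; simpl in Hr, Hi.
  set (m := Cmod (h1, h2)) in *.
  assert (Hm : 0 <= m) by apply Cmod_ge_0.
  pose proof (exp_bnd h1 ltac:(lra)) as He.
  pose proof (cos_bnd h2 ltac:(lra)) as Hc.
  pose proof (sin_bnd h2 ltac:(lra)) as Hs.
  apply Rabs_le_between in Hr. apply Rabs_le_between in Hi.
  apply Rabs_le_between in Hs.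
  replace (Cexp (h1, h2) - 1 - (h1, h2))%C with
    (exp h1 * cos h2 - 1 - h1, exp h1 * sin h2 - h2).
  2:{ unfold Cexp, Cminus, Cplus, Copp; simpl. f_equal; ring. }
  replace (7 * m ^ 2) with (3 * m ^ 2 + 4 * m ^ 2) by ring.
  assert (HE1 : 0 < exp h1) by apply exp_pos.
  assert (HE2 : exp h1 <= 2) by nra.
  assert (Hh1 : h1 ^ 2 <= m ^ 2) by nra.
  assert (Hh2 : h2 ^ 2 <= m ^ 2) by nra.
  assert (Hh12 : Rabs (h1 * h2) <= m ^ 2).
  { rewrite Rabs_mult. pose proof (Rabs_pos h1). pose proof (Rabs_pos h2).
    assert (Rabs h1 <= m) by (apply Rabs_le; lra).
    assert (Rabs h2 <= m) by (apply Rabs_le; lra). nra. }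
  apply Rabs_le_between in Hh12.
  apply Cmod_le.
  - replace (exp h1 * cos h2 - 1 - h1) with (exp h1 * (cos h2 - 1) + (exp h1 - 1 - h1)) by ring.
    assert (0 <= exp h1 * (1 - cos h2) <= 2 * (h2 ^ 2 / 2)) by (split; nra).
    apply Rabs_le. split; nra.
  - replace (exp h1 * sin h2 - h2) with (exp h1 * (sin h2 - h2) + (exp h1 - 1) * h2) by ring.
    assert (Rabs (exp h1 * (sin h2 - h2)) <= 2 * h2 ^ 2).
    { rewrite Rabs_mult, Rabs_pos_eq by lra. apply Rmult_le_compat; try lra.
      apply Rabs_pos. apply Rabs_le; lra. }
    assert (Rabs ((exp h1 - 1) * h2) <= 2 * m ^ 2).
    { replace ((exp h1 - 1) * h2) with ((exp h1 - 1 - h1) * h2 + h1 * h2) by ring.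
      eapply Rle_trans; [apply Rabs_triang|]. 
      assert (Rabs ((exp h1 - 1 - h1) * h2) <= m ^ 2).
      { rewrite Rabs_mult, (Rabs_pos_eq (exp h1 - 1 - h1)) by lra.
        assert (Rabs h2 <= m) by (apply Rabs_le; lra).
        pose proof (Rabs_pos h2). 
        assert (exp h1 - 1 - h1 <= m) by nra. nra. }
      assert (Rabs (h1 * h2) <= m ^ 2) by (apply Rabs_le; lra). lra. }
    eapply Rle_trans; [apply Rabs_triang|]. lra.
Qed.

Lemma Cexp_deriv z : @is_derive C_AbsRing (AbsRing_NormedModule C_AbsRing) Cexp z (Cexp z).
Proof.
  split.
  - apply is_linear_scal_l.
  - intros x' Hx'. apply (@is_filter_lim_locally_unique _ (AbsRing_NormedModule C_AbsRing)) in Hx'. subst x'.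
    intros eps.
    pose (KM := 2 * exp (Re z)).
    assert (HKM : 0 < KM) by (unfold KM; pose proof (exp_pos (Re z)); lra).
    assert (Hd : 0 < Rmin (/2) (eps / (9 * KM))).
    { apply Rmin_pos; [lra|]. apply Rdiv_lt_0_compat; [apply cond_pos|lra]. }
    exists (mkposreal _ Hd). intros y Hy.
    change (Cmod (y - z)%C < Rmin (/2) (eps / (9 * KM))) in Hy.
    change (Cmod ((Cexp y - Cexp z) - (y - z) * Cexp z)%C <= eps * Cmod (y - z)%C).
    remember (y - z)%C as h eqn:Eh.
    replace y with (z + h)%C by (rewrite Eh; ring).
    rewrite Cexp_add.
    replace (Cexp z * Cexp h - Cexp z - h * Cexp z)%C with (Cexp z * (Cexp h - 1 - h))%C by ring.
    rewrite Cmod_mult.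
    assert (Hz : Cmod (Cexp z) <= KM).
    { unfold Cexp, KM. pose proof (exp_pos (Re z)).
      replace (2 * exp (Re z)) with (exp (Re z) + exp (Re z)) by ring.
      apply Cmod_le; rewrite Rabs_mult, Rabs_pos_eq by lra.
      - pose proof (COS_bound (Im z)). rewrite <- (Rmult_1_r (exp (Re z))) at 2.
        apply Rmult_le_compat_l; [lra|]. apply Rabs_le; lra.
      - pose proof (SIN_bound (Im z)). rewrite <- (Rmult_1_r (exp (Re z))) at 2.
        apply Rmult_le_compat_l; [lra|]. apply Rabs_le; lra. }
    pose proof (Rmin_l (/2) (eps / (9 * KM))). pose proof (Rmin_r (/2) (eps / (9 * KM))).
    pose proof (Cexp_rem h ltac:(lra)) as Hr.
    pose proof (Cmod_ge_0 h). pose proof (Cmod_ge_0 (Cexp z)).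
    assert (Hk : 9 * KM * (eps / (9 * KM)) = eps) by (field; lra).
    assert (Cmod h * (9 * KM) <= eps) by nra.
    nra.
Qed.

Lemma conv (f : C -> C) z l : @is_derive C_AbsRing (AbsRing_NormedModule C_AbsRing) f z l -> @is_derive C_AbsRing C_NormedModule f z l.
Proof. intros [_ H]; split; [apply is_linear_scal_l|]. intros x Hx eps. specialize (H x Hx eps). exact H. Qed.

Lemma is_derive_eq (f g : C -> C) (x l l' : C) :
  (forall t, f t = g t) -> l = l' -> @is_derive C_AbsRing (AbsRing_NormedModule C_AbsRing) f x l -> @is_derive C_AbsRing (AbsRing_NormedModule C_AbsRing) g x l'.
Proof. intros Hf <-. apply (@is_derive_ext C_AbsRing (AbsRing_NormedModule C_AbsRing)). exact Hf. Qed.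

Lemma charP_deriv eps a tau z :
  @is_derive C_AbsRing C_NormedModule (charP eps a tau) z
    (2 * z - RtoC eps + RtoC (eps * a * tau) * Cexp (- (z * RtoC tau)))%C.
Proof.
  apply conv.
  assert (Hc : forall n m : C_AbsRing, mult n m = mult m n) by (intros; apply Cmult_comm).
  assert (Hid := @is_derive_id C_AbsRing z).
  assert (H1 := is_derive_mult _ _ _ _ _ Hid Hid Hc).
  assert (H2 := is_derive_mult _ _ _ _ _ Hid (@is_derive_const C_AbsRing (AbsRing_NormedModule C_AbsRing) (RtoC eps) z) Hc).
  assert (H3 := is_derive_opp _ _ _ (is_derive_mult _ _ _ _ _ Hid (@is_derive_const C_AbsRing (AbsRing_NormedModule C_AbsRing) (RtoC tau) z) Hc)).
  assert (H4 := @is_derive_comp C_AbsRing (AbsRing_NormedModule C_AbsRing) Cexp _ _ _ _ (Cexp_deriv _) H3).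
  assert (H5 := is_derive_mult _ _ _ _ _ (@is_derive_const C_AbsRing (AbsRing_NormedModule C_AbsRing) (RtoC (eps * a)) z) H4 Hc).
  pose proof (is_derive_plus _ _ _ _ _ (is_derive_minus _ _ _ _ _ (is_derive_minus _ _ _ _ _ H1 H2) H5)
     (@is_derive_const C_AbsRing (AbsRing_NormedModule C_AbsRing) (RtoC 1) z)) as H.
  simpl in H.
  revert H. apply is_derive_eq.
  - intro t. unfold charP. repeat change (plus ?x ?y) with (Cplus x y). repeat change (minus ?x ?y) with (Cminus x y).
    repeat change (mult ?x ?y) with (Cmult x y). repeat change (opp ?x) with (Copp x). ring.
  - repeat change (plus ?x ?y) with (Cplus x y). repeat change (minus ?x ?y) with (Cminus x y).
    repeat change (mult ?x ?y) with (Cmult x y). repeat change (opp ?x) with (Copp x). repeat change (scal ?x ?y) with (Cmult x y).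
    change one with (RtoC 1). change zero with (RtoC 0). rewrite !RtoC_mult. ring.
Qed.

Lemma Cexp_iw w tau : Cexp (- ((0, w) * RtoC tau))%C = (cos (w * tau), - sin (w * tau)).
Proof.
  unfold Cexp, Cmult, Copp, RtoC; simpl.
  replace (- (0 * tau - w * 0)) with 0 by ring.
  replace (- (0 * 0 + w * tau)) with (- (w * tau)) by ring.
  rewrite exp_0, cos_neg, sin_neg. f_equal; ring.
Qed.

Lemma root_core eps a tau w : 0 < eps -> a <> 0 -> w <> 0 ->
  eps * a * cos (w * tau) = 1 - w ^ 2 -> a * sin (w * tau) = w ->
  w ^ 2 <> 1 - eps ^ 2 / 2 ->
  simple_root (charP eps a tau) (0, w).
Proof.
  intros He Ha Hw Hc Hs Hne. split.
  - unfold charP. rewrite Cexp_iw.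
    unfold Cmult, Cminus, Cplus, Copp, RtoC; simpl. f_equal; nra.
  - eexists. split; [apply charP_deriv|].
    rewrite Cexp_iw. unfold Cmult, Cminus, Cplus, Copp, RtoC; simpl.
    intro H. injection H as H1 H2.
    assert (E1 : -eps + tau * (1 - w ^ 2) = 0) by (rewrite <- Hc; lra).
    assert (E2 : w * (2 - eps * tau) = 0).
    { replace (eps * a * tau * - sin (w * tau)) with (- (eps * tau) * (a * sin (w * tau))) in H2 by ring.
      rewrite Hs in H2. lra. }
    apply Rmult_integral in E2. destruct E2 as [E2|E2]; [lra|].
    apply Hne.
    assert (eps * (-eps + tau * (1 - w ^ 2)) = 0) by (rewrite E1; ring).
    replace (eps * (-eps + tau * (1 - w ^ 2))) with (- eps ^ 2 + (eps * tau) * (1 - w ^ 2)) in H by ring.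
    replace (eps * tau) with 2 in H by lra. lra.
Qed.

Lemma tau_lemma eps a w j : 0 < eps -> a <> 0 -> 0 < w ->
  (1 - w ^ 2) ^ 2 + eps ^ 2 * w ^ 2 = eps ^ 2 * a ^ 2 ->
  eps * a * cos (w * tau_of eps a w j) = 1 - w ^ 2 /\
  a * sin (w * tau_of eps a w j) = w.
Proof.
  intros He Ha Hw Hk.
  set (x := (1 - w ^ 2) / (eps * a)).
  assert (Hea : eps * a <> 0) by (apply Rmult_integral_contrapositive; split; lra).
  assert (Hx2 : 1 - x² = (w / Rabs a) ^ 2).
  { replace (1 - x²) with (((eps*a)^2 - (1-w^2)^2) / (eps*a)^2) by (unfold x, Rsqr; field; repeat split; auto; lra).
    replace ((eps*a)^2 - (1-w^2)^2) with (eps^2 * w^2) by (rewrite Rpow_mult_distr, <- Hk; ring).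
    destruct (Rcase_abs a) as [Hl|Hr].
    - rewrite Rabs_left by lra. field. split; lra.
    - rewrite Rabs_right by lra. field. split; lra. }
  assert (Hx : -1 <= x <= 1).
  { assert (0 <= (w / Rabs a) ^ 2) by (apply pow2_ge_0).
    unfold Rsqr in Hx2. split; nra. }
  assert (Hsq : sqrt (1 - x²) = w / Rabs a).
  { rewrite Hx2. apply sqrt_pow2. apply Rdiv_le_0_compat; [lra|]. apply Rabs_pos_lt; auto. }
  assert (Hcx : eps * a * x = 1 - w ^ 2) by (unfold x; field; repeat split; auto; lra).
  unfold tau_of. destruct (Rlt_dec 0 a) as [Hp|Hn].
  - replace (w * (/ w * (acos ((1 - w ^ 2) / (eps * a)) + 2 * INR j * PI)))
      with (acos x + 2 * INR j * PI) by (unfold x; field; lra).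
    rewrite cos_period, sin_period, cos_acos, sin_acos, Hsq by exact Hx.
    split; [exact Hcx|]. rewrite Rabs_pos_eq by lra. field. lra.
  - replace (w * (/ w * (2 * PI - acos ((1 - w ^ 2) / (eps * a)) + 2 * INR j * PI)))
      with (- acos x + 2 * INR (S j) * PI) by (rewrite S_INR; unfold x; field; lra).
    rewrite cos_period, sin_period, cos_neg, sin_neg, cos_acos, sin_acos, Hsq by exact Hx.
    split; [exact Hcx|]. rewrite Rabs_left by lra. field. lra.
Qed.

Lemma both_roots eps a tau w : 0 < eps -> a <> 0 -> 0 < w ->
  eps * a * cos (w * tau) = 1 - w ^ 2 -> a * sin (w * tau) = w ->
  w ^ 2 <> 1 - eps ^ 2 / 2 ->
  simple_root (charP eps a tau) (0, w) /\ simple_root (charP eps a tau) (0, - w).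
Proof.
  intros He Ha Hw Hc Hs Hn. split.
  - apply root_core; auto; lra.
  - apply root_core; auto.
    + lra.
    + replace (- w * tau) with (- (w * tau)) by ring. rewrite cos_neg. rewrite Hc. ring.
    + replace (- w * tau) with (- (w * tau)) by ring. rewrite sin_neg. lra.
    + replace ((- w) ^ 2) with (w ^ 2) by ring. exact Hn.
Qed.

Lemma w_facts eps a s w sg : 0 < eps -> 0 < s -> s ^ 2 = eps ^ 2 - 4 + 4 * a ^ 2 ->
  (sg = 1 \/ sg = -1) ->
  0 < 2 - eps ^ 2 + sg * eps * s ->
  w = / sqrt 2 * sqrt (2 - eps ^ 2 + sg * eps * s) ->
  0 < w /\ (1 - w ^ 2) ^ 2 + eps ^ 2 * w ^ 2 = eps ^ 2 * a ^ 2 /\ w ^ 2 <> 1 - eps ^ 2 / 2.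
Proof.
  intros He Hs Hs2 Hsg HA Hw.
  assert (Hs2p : 0 < sqrt 2) by (apply sqrt_lt_R0; lra).
  assert (Hw2 : w ^ 2 = (2 - eps ^ 2 + sg * eps * s) / 2).
  { rewrite Hw, Rpow_mult_distr, pow2_sqrt by lra. rewrite pow_inv, pow2_sqrt by lra. field. }
  split; [|split].
  - rewrite Hw. apply Rmult_lt_0_compat; [apply Rinv_0_lt_compat; lra|]. apply sqrt_lt_R0; lra.
  - rewrite Hw2.
    assert (Hsg2 : sg ^ 2 = 1) by (destruct Hsg as [-> | ->]; ring).
    assert (E : (1 - (2 - eps ^ 2 + sg * eps * s) / 2) ^ 2 + eps ^ 2 * ((2 - eps ^ 2 + sg * eps * s) / 2) - eps ^ 2 * a ^ 2
              = eps ^ 2 / 4 * (sg ^ 2 * s ^ 2 - (eps ^ 2 - 4 + 4 * a ^ 2))) by field.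
    rewrite Hsg2, Hs2 in E. lra.
  - rewrite Hw2. intro H. assert (eps * s > 0) by (apply Rmult_lt_0_compat; lra).
    destruct Hsg as [-> | ->]; lra.
Qed.

Theorem lemma1 (a eps0 : R) (m n : nat) :
  a <> 0 ->
  0 < eps0 -> eps0 < sqrt 2 -> eps0 * Rabs a < 1 ->
  eps0 ^ 2 + 4 * a ^ 2 > 4 ->
  tau1 eps0 a m = tau2 eps0 a n ->
  let tau0 := tau1 eps0 a m in
  let w1 := omega1 eps0 a in
  let w2 := omega2 eps0 a in
  0 < w2 < w1 /\
  simple_root (charP eps0 a tau0) (0, w1) /\
  simple_root (charP eps0 a tau0) (0, - w1) /\
  simple_root (charP eps0 a tau0) (0, w2) /\
  simple_root (charP eps0 a tau0) (0, - w2).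
Proof.
  intros Ha He1 He2 He3 He4 Heq tau0 w1 w2.
  pose (s := sqrt (eps0 ^ 2 - 4 + 4 * a ^ 2)).
  assert (Hs : 0 < s) by (apply sqrt_lt_R0; lra).
  assert (Hs2 : s ^ 2 = eps0 ^ 2 - 4 + 4 * a ^ 2) by (apply pow2_sqrt; lra).
  assert (He2' : eps0 ^ 2 < 2).
  { assert (0 <= sqrt 2) by apply sqrt_pos. rewrite <- (pow2_sqrt 2) by lra. nra. }
  assert (Hea : eps0 ^ 2 * a ^ 2 < 1).
  { rewrite <- (pow2_abs a). pose proof (Rabs_pos a). replace (eps0 ^ 2 * Rabs a ^ 2) with ((eps0 * Rabs a) ^ 2) by ring. assert (0 <= eps0 * Rabs a) by (apply Rmult_le_pos; lra). nra. }
  assert (Hes : 0 < eps0 * s) by (apply Rmult_lt_0_compat; lra).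
  assert (HA2 : 0 < 2 - eps0 ^ 2 + -1 * eps0 * s).
  { assert ((2 - eps0 ^ 2 - eps0 * s) * (2 - eps0 ^ 2 + eps0 * s) = 4 - 4 * (eps0 ^ 2 * a ^ 2)).
    { replace ((2 - eps0 ^ 2 - eps0 * s) * (2 - eps0 ^ 2 + eps0 * s)) with
        ((2 - eps0 ^ 2) ^ 2 - eps0 ^ 2 * s ^ 2) by ring. rewrite Hs2. ring. }
    nra. }
  assert (HA1 : 0 < 2 - eps0 ^ 2 + 1 * eps0 * s) by lra.
  destruct (w_facts eps0 a s w1 1 He1 Hs Hs2 ltac:(left; reflexivity) HA1) as [Hw1 [Hk1 Hn1]].
  { unfold w1, omega1, s. f_equal. f_equal. ring. }
  destruct (w_facts eps0 a s w2 (-1) He1 Hs Hs2 ltac:(right; reflexivity) HA2) as [Hw2 [Hk2 Hn2]].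
  { unfold w2, omega2, s. f_equal. f_equal. ring. }
  split; [split; [exact Hw2|] |].
  { unfold w1, w2, omega1, omega2. apply Rmult_lt_compat_l.
    - apply Rinv_0_lt_compat. apply sqrt_lt_R0; lra.
    - apply sqrt_lt_1; fold s; lra. }
  destruct (tau_lemma eps0 a w1 m He1 Ha Hw1 Hk1) as [Hc1 Hs1].
  destruct (tau_lemma eps0 a w2 n He1 Ha Hw2 Hk2) as [Hc2 Hs2'].
  destruct (both_roots eps0 a tau0 w1 He1 Ha Hw1 Hc1 Hs1 Hn1) as [R1 R2].
  assert (Ht : tau0 = tau_of eps0 a w2 n) by (unfold tau0; rewrite Heq; reflexivity).
  rewrite <- Ht in Hc2, Hs2'.
  destruct (both_roots eps0 a tau0 w2 He1 Ha Hw2 Hc2 Hs2' Hn2) as [R3 R4].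
  auto.
Qed.
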